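(* Let $M\ge2$ and consider a hierarchical system as described in the context. For $l\in\{1,\dots,M\}$ let $L^{(l)}_e=K^{(l)}L^{(l)}_D$. Then $\lambda(L^{(l)}_e)=\lambda(L^{(l)})\subset\mathbb{R}$; in particular $\lambda(L^{(l)})$ is the same for every choice of the stochastic row vectors $C^{(m)}_p$. Moreover, with $L=\sum_{l=1}^ML^{(l)}$, \[ \lambda(L)=\{0\}\cup\big(\lambda(L^{(1)}_e)\setminus\{0\}\big)\cup\cdots\cup\big(\lambda(L^{(M)}_e)\setminus\{0\}\big). \]
   Context: Hierarchical structure. Fix an integer $M\ge 2$ and positive integers $N^{(1)},\dots,N^{(M)}$; set $N^{(M+1)}:=1$. For each $l\in\{1,\dots,M\}$ the $N^{(l)}$ nodes of layer $l$ are partitioned into $N^{(l+1)}$ groups $G^{(l)}_1,\dots,G^{(l)}_{N^{(l+1)}}$ of sizes $k^{(l)}_p\ge1$ (so $\sum_pk^{(l)}_p=N^{(l)}$), numbered consecutively: group $G^{(l)}_p$ consists of nodes $\sum_{m<p}k^{(l)}_m+1,\dots,\sum_{m\le p}k^{(l)}_m$ of layer $l$. Each group $G^{(l)}_p$ carries a connected undirected graph with binary adjacency matrix; $L^{(l)}_p$ is its Laplacian (degree matrix minus adjacency matrix), and $L^{(l)}_D=\mathrm{diag}(L^{(l)}_1,\dots,L^{(l)}_{N^{(l+1)}})$ (block diagonal). Weights: positive constants $a_1,\dots,a_{N^{(1)}}$; $a^{(1)}_i=a_i$, $a^{(l+1)}_p=\sum_{i\in G^{(l)}_p}a^{(l)}_i$;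 $K^{(l)}=\mathrm{diag}(a^{(l)}_1,\dots,a^{(l)}_{N^{(l)}})^{-1}$. For $l=1,\dots,M-1$: $B^{(l)}=\mathrm{diag}(\mathbf{1}_{k^{(l)}_1},\dots,\mathbf{1}_{k^{(l)}_{N^{(l+1)}}})\in\mathbb{R}^{N^{(l)}\times N^{(l+1)}}$ ($\mathbf 1_k$ all-ones column vector), $C^{(l)}=\mathrm{diag}(C^{(l)}_1,\dots,C^{(l)}_{N^{(l+1)}})\in\mathbb{R}^{N^{(l+1)}\times N^{(l)}}$ with each $C^{(l)}_p\in\mathbb{R}^{1\times k^{(l)}_p}$ having nonnegative entries summing to $1$. $L^{(1)}=K^{(1)}L^{(1)}_D$ and $L^{(l)}=B^{(1)}\cdots B^{(l-1)}K^{(l)}L^{(l)}_DC^{(l-1)}\cdots C^{(1)}$ for $l=2,\dots,M$. $\lambda(A)$ is the set of (distinct) eigenvalues of $A$. *)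

(* Defs.v *)
(* Layers are indexed from 0 (paper's layer l = our layer l-1). *)
From HB Require Import structures.
From mathcomp Require Import all_boot all_order all_algebra.
From mathcomp Require Import complex.
Unset Implicit Arguments.
 Unset Strict Implicit. Unset Printing Implicit Defensive.
Import Order.TTheory GRing.Theory Num.Theory.
Local Open Scope ring_scope.

Section Hier.
Variable R : rcfType.
Variable N : nat -> nat.

(* Partition of layer-l nodes into groups indexed by layer-(l+1) nodes:
   node i belongs to group g i. Consecutive numbering = g nondecreasing;
   all groups nonempty = g surjective. *)
Definition hier_groups (l : nat) (g : 'I_(N l) -> 'I_(N l.+1)) : Prop :=
  (forall i j : 'I_(N l), (i <= j)%N -> (g i <= g j)%N) /\
  (forall p : 'I_(N l.+1), exists i, g i = p).

Definition group_graph (l : nat) (g : 'I_(N l) -> 'I_(N l.+1))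
    (A : 'M[R]_(N l)) : Prop :=
  [/\ (forall i j, A i j = 0 \/ A i j = 1),
      A^T = A,
      (forall i, A i i = 0),
      (forall i j, A i j != 0 -> g i = g j)
    & (forall i j, g i = g j -> connect (fun x y => A x y != 0) i j)].

(* Laplacian (degree matrix minus adjacency); for A as above this is the
   block-diagonal matrix L_D = diag(L_1, ..., L_{N(l+1)}). *)
Definition laplacian {n} (A : 'M[R]_n) : 'M[R]_n :=
  diag_mx (\row_i \sum_j A i j) - A.

Definition stoch_sel (l : nat) (g : 'I_(N l) -> 'I_(N l.+1))
    (C : 'M[R]_(N l.+1, N l)) : Prop :=
  [/\ (forall p i, 0 <= C p i),
      (forall p i, C p i != 0 -> g i = p)
    & (forall p, \sum_(i | g i == p) C p i = 1)].

Variable g : forall (l : nat), 'I_(N l) -> 'I_(N l.+1).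
Variable a : 'I_(N 0) -> R.

Fixpoint wt (l : nat) : 'I_(N l) -> R :=
  match l with
  | 0 => a
  | l'.+1 => fun p => \sum_(i | g l' i == p) wt l' i
  end.

Definition Kmx (l : nat) : 'M[R]_(N l) := invmx (diag_mx (\row_i wt l i)).

Definition Bmx (l : nat) : 'M[R]_(N l, N l.+1) :=
  \matrix_(i, p) (g l i == p)%:R.

Fixpoint Bprod (l : nat) : 'M[R]_(N 0, N l) :=
  match l with
  | 0 => 1%:M
  | l'.+1 => Bprod l' *m Bmx l'
  end.

Variable A : forall (l : nat), 'M[R]_(N l).

Definition Le (l : nat) : 'M[R]_(N l) := Kmx l *m laplacian (A l).

Variable Cm : forall (l : nat), 'M[R]_(N l.+1, N l).

Fixpoint Cprod (l : nat) : 'M[R]_(N l, N 0) :=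
  match l with
  | 0 => 1%:M
  | l'.+1 => Cm l' *m Cprod l'
  end.

Definition Llay (l : nat) : 'M[R]_(N 0) := Bprod l *m Le l *m Cprod l.

Definition Ltot (M : nat) : 'M[R]_(N 0) := \sum_(l < M) Llay l.

End Hier.

Definition ceig (R : rcfType) n (X : 'M[R]_n) (z : R[i]) : bool :=
  eigenvalue (map_mx (fun x : R => (x%:C)%C) X) z.

Arguments hier_groups {N} l g.
Arguments group_graph {R N} l g A.
Arguments stoch_sel {R N} l g C.
Arguments wt {R N} g a l.
Arguments Kmx {R N} g a l.
Arguments Bmx {R N} g l.
Arguments Bprod {R N} g l.
Arguments Le {R N} g a A l.
Arguments Cprod {R N} Cm l.
Arguments Llay {R N} g a A Cm l.
Arguments Ltot {R N} g a A Cm M.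
Arguments ceig {R n} X z.

(* Main.v *)
Require Import Defs.
From HB Require Import structures.
From mathcomp Require Import all_boot all_order all_algebra.
From mathcomp Require Import complex zify ring lra.
Import Order.TTheory GRing.Theory Num.Theory.
Local Open Scope ring_scope.
Set Implicit Arguments. Unset Strict Implicit.
Section Abs.
Variable F : fieldType.

Lemma eig_unit n (X : 'M[F]_n) z : eigenvalue X z = (X - z%:M \notin unitmx).
Proof. by rewrite /eigenvalue /eigenspace kermx_eq0 row_free_unit. Qed.

Lemma eig0_of n m (X : 'M[F]_n) (Y : 'M[F]_(n, m)) : X *m Y = 0 -> Y != 0 ->
  eigenvalue X 0.
Proof.
move=> XY Y0; rewrite eig_unit (_ : 0%:M = 0) ?subr0; last by apply/matrixP => i j; rewrite !mxE mul0rn.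
  apply/negP => uX.
by move: Y0; rewrite -(mulKmx uX Y) XY mulmx0 eqxx.
Qed.

Lemma eig_stable n (L W : 'M[F]_n) (u : 'rV[F]_n) z :
  (W *m L <= W)%MS -> (u *m L - z *: u <= W)%MS -> ~~ (u <= W)%MS ->
  eigenvalue L z.
Proof.
move=> sWL suW nuW; rewrite eig_unit; apply/negP => uT.
set T := L - z%:M in uT.
have sWT : (W *m T <= W)%MS.
  by rewrite /T mulmxBr mul_mx_scalar addmx_sub ?eqmx_opp ?scalemx_sub.
have eWT : (W *m T == W)%MS.
  by rewrite -(mxrank_leqif_eq sWT) mxrankMfree // row_free_unit.
have : (u *m T <= W *m T)%MS.
  by rewrite (eqmxP eWT) /T mulmxBr mul_mx_scalar.
case/submxP => D uTD.
have : u = D *m W.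
  by rewrite -(mulmxK uT u) uTD mulmxA mulmxK.
by move=> uDW; move: nuW; rewrite uDW submxMl.
Qed.

Variable N : nat -> nat.
Variable M : nat.
Variable P : forall l, 'M[F]_(N 0, N l).
Variable Q : forall l, 'M[F]_(N l, N 0).
Variable E : forall l, 'M[F]_(N l).
Hypothesis P0 : P 0 = 1%:M.
Hypothesis H1 : forall l, (l < M)%N -> Q l *m P l = 1%:M.
Hypothesis H2 : forall l m, (l < M)%N -> (l < m)%N -> E l *m Q l *m P m = 0.
Hypothesis H3 : forall l m, (l <= m)%N -> exists Y, P m = P l *m Y.
Hypothesis HPM : P M != 0.

Definition Lt := \sum_(l < M) P l *m E l *m Q l.

Lemma Le_eig0 l : (l < M)%N -> eigenvalue (E l) 0.
Proof.
move=> lM; apply: (@eig0_of _ _ _ (Q l *m P M)); first by rewrite mulmxA H2.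
have [Y PY] := H3 (ltnW lM).
by rewrite PY mulmxA H1 // mul1mx; apply: contra HPM; rewrite PY => /eqP->; rewrite mulmx0.
Qed.

Lemma Llay_eig0 l : (l < M)%N -> eigenvalue (P l *m E l *m Q l) 0.
Proof.
move=> lM; apply: (eig0_of _ HPM).
by rewrite -!mulmxA (mulmxA (E l)) H2 // mulmx0.
Qed.

Lemma Lt_eig0 : eigenvalue Lt 0.
Proof.
apply: (eig0_of _ HPM); rewrite /Lt mulmx_suml big1 // => l _.
by rewrite -!mulmxA (mulmxA (E l)) H2 ?ltn_ord // mulmx0.
Qed.

Lemma Llay_to_E l z : (l < M)%N -> z != 0 ->
  eigenvalue (P l *m E l *m Q l) z -> eigenvalue (E l) z.
Proof.
move=> lM z0 /eigenvalueP [u uL u0]; apply/eigenvalueP; exists (u *m P l).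
  by rewrite scalemxAl -uL !mulmxA -(mulmxA _ (Q l) (P l)) H1 // mulmx1.
apply/eqP => uP0.
have : z *: u = 0 by rewrite -uL !mulmxA uP0 !mul0mx.
by move/eqP; rewrite scaler_eq0 (negPf z0) (negPf u0).
Qed.

Lemma E_to_Llay l z : (l < M)%N ->
  eigenvalue (E l) z -> eigenvalue (P l *m E l *m Q l) z.
Proof.
move=> lM /eigenvalueP [y yE y0]; apply/eigenvalueP; exists (y *m Q l).
  by rewrite !mulmxA -(mulmxA y) H1 // mulmx1 yE scalemxAl.
by apply: contra y0 => /eqP yQ; rewrite -(mulmx1 y) -(H1 lM) mulmxA yQ mul0mx.
Qed.

Hypothesis M0 : (0 < M)%N.

Lemma Lt_to_E z : eigenvalue Lt z -> exists2 l, (l < M)%N & eigenvalue (E l) z.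
Proof.
case/eigenvalueP => u uL u0.
have main : forall d k, (M - k = d)%N -> (k < M)%N -> u *m P k != 0 ->
    exists2 l, (l < M)%N & eigenvalue (E l) z.
  elim/ltn_ind => d IH k dk kM uk.
  case: (boolP [exists l : 'I_M, (k < l)%N && (u *m P l != 0)]).
    case/existsP => l /andP [kl ul]; have lM := ltn_ord l.
    by apply: (IH (M - l)%N _ l) => //; lia.
  rewrite negb_exists => /forallP nl; exists k => //.
  apply/eigenvalueP; exists (u *m P k) => //.
  have : u *m Lt *m P k = z *: (u *m P k) by rewrite uL scalemxAl.
  rewrite /Lt mulmx_sumr mulmx_suml (bigD1 (Ordinal kM)) //= big1 ?addr0.
    by move=> <-; rewrite !mulmxA -(mulmxA _ (Q k)) H1 // mulmx1.
  move=> j jk; case: (ltngtP j k) => [jk'|kj|ejk].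
  - by rewrite -!mulmxA (mulmxA (E j)) H2 // !mulmx0.
  - have := nl j; rewrite kj /= negbK => /eqP uj.
    by rewrite !mulmxA uj !mul0mx.
  - by move: jk; rewrite (_ : j = Ordinal kM) ?eqxx //; apply: val_inj.
apply: (main (M - 0)%N 0%N) => //.
by rewrite P0 mulmx1.
Qed.

Lemma kerP_stable l p (w : 'M[F]_(p, N 0)) : (l < M)%N -> w *m P l = 0 ->
  w *m Lt *m P l = 0.
Proof.
move=> lM wP; rewrite /Lt mulmx_sumr mulmx_suml big1 // => j _.
case: (ltnP j l) => jl.
  by rewrite -!mulmxA (mulmxA (E j)) H2 // ?mulmx0 // (ltn_trans jl).
have [Y PY] := H3 jl.
by rewrite !mulmxA PY mulmxA wP !mul0mx.
Qed.

Lemma E_to_Lt l z : (l < M)%N -> z != 0 -> eigenvalue (E l) z -> eigenvalue Lt z.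
Proof.
move=> lM z0 /eigenvalueP [y yE y0].
apply: (@eig_stable _ _ (kermx (P l)) (y *m Q l)).
- rewrite sub_kermx; apply/eqP; apply: kerP_stable => //.
  by apply/eqP; rewrite -sub_kermx submx_refl.
- rewrite sub_kermx mulmxBl -scalemxAl -!mulmxA H1 // mulmx1.
  rewrite !mulmxA /Lt mulmx_sumr mulmx_suml (bigD1 (Ordinal lM)) //= big1 ?addr0.
    by rewrite !mulmxA -(mulmxA y) H1 // mulmx1 -(mulmxA _ (Q l)) H1 // mulmx1 yE subrr.
  move=> j jl; case: (ltngtP j l) => [jl'|lj|ejl].
  - by rewrite -!mulmxA (mulmxA (E j)) H2 // !mulmx0.
  - have yQP : y *m Q l *m P j = 0.
      have -> : y = z^-1 *: (y *m E l) by rewrite yE scalerA mulVf // scale1r.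
      by rewrite -!scalemxAl -!mulmxA (mulmxA (E l)) H2 // mulmx0 scaler0.
    by rewrite !mulmxA yQP !mul0mx.
  - by move: jl; rewrite (_ : j = Ordinal lM) ?eqxx //; apply: val_inj.
- by rewrite sub_kermx -mulmxA H1 // mulmx1.
Qed.

End Abs.
Lemma cjM (R : rcfType) (a b : R[i]) : conjc (a * b) = conjc a * conjc b.
Proof. exact: rmorphM. Qed.
Lemma cjD (R : rcfType) (a b : R[i]) : conjc (a + b) = conjc a + conjc b.
Proof. exact: rmorphD. Qed.
Lemma cj0 (R : rcfType) : conjc (0 : R[i]) = 0.
Proof. exact: rmorph0. Qed.
Lemma cjS (R : rcfType) (I : finType) (F : I -> R[i]) :
  conjc (\sum_i F i) = \sum_i conjc (F i).
Proof. exact: (big_morph _ (@cjD R) (@cj0 R)). Qed.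

Lemma real_eig (R : rcfType) n (w : 'I_n -> R) (Lp : 'M[R]_n) (z : R[i]) :
  (forall i, 0 < w i) -> (forall i j, Lp i j = Lp j i) ->
  eigenvalue (map_mx (real_complex R) (\matrix_(i,j) ((w i)^-1 * Lp i j))) z ->
  exists r : R, z = (r%:C)%C.
Proof.
move=> wpos LS /eigenvalueP [y yE y0].
have wC0 i : ((w i)%:C)%C != 0 :> R[i].
  by rewrite (inj_eq (@complexI R)) ?gt_eqF // wpos.
pose x := \row_i (y 0 i * ((w i)^-1)%:C)%C.
have yx i : y 0 i = ((w i)%:C)%C * x 0 i.
  by rewrite mxE mulrCA -rmorphM mulfV ?gt_eqF // rmorph1 mulr1.
have eq j : \sum_i x 0 i * ((Lp i j)%:C)%C = z * (((w j)%:C)%C * x 0 j).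
  have := congr1 (fun B : 'M[R[i]]_(1, n) => B 0 j) yE; move=> h; rewrite !mxE in h; rewrite -yx -h.
  by apply: eq_bigr => i _; rewrite !mxE rmorphM mulrA.
have x0 : x != 0.
  apply: contra y0 => /eqP x0; apply/eqP/rowP => i.
  by rewrite yx x0 !mxE mulr0.
pose S := \sum_j (\sum_i x 0 i * ((Lp i j)%:C)%C) * conjc (x 0 j).
pose D := \sum_j ((w j)%:C)%C * (x 0 j * conjc (x 0 j)).
have SD : S = z * D.
  rewrite /S /D mulr_sumr; apply: eq_bigr => j _; rewrite eq; ring.
have cS : conjc S = S.
  rewrite /S cjS.
  under eq_bigr => j _ do rewrite cjM cjS conjcK.
  under eq_bigr => j _ do under eq_bigr => i _ do rewrite cjM conjc_real.
  rewrite [LHS](eq_bigr (fun j => \sum_i conjc (x 0 i) * ((Lp i j)%:C)%C * x 0 j)); last first.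
    by move=> j _; rewrite mulr_suml.
  rewrite exchange_big; apply: eq_bigr => j _; rewrite mulr_suml.
  by apply: eq_bigr => i _; rewrite LS; ring.
have cD : conjc D = D.
  rewrite /D cjS; apply: eq_bigr => j _.
  by rewrite !cjM conjc_real conjcK mulrC [conjc _ * _]mulrC mulrC.
have D0 : D != 0.
  have [j xj] : exists j, x 0 j != 0.
    apply/existsP; apply: contraR x0; rewrite negb_exists => /forallP h.
    by apply/eqP/rowP => i; rewrite [RHS]mxE; apply/eqP; move: (h i); rewrite negbK.
  apply/eqP => /psumr_eq0P h.
  have : ((w j)%:C)%C * (x 0 j * conjc (x 0 j)) = 0.
    apply: h => // i _; apply: mulr_ge0; last exact: mulcJ_ge0.
    by rewrite ler0c ltW.
  by apply/eqP; rewrite !mulf_neq0 // conjc_eq0.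
have zc : conjc z = z.
  by apply: (mulIf D0); rewrite -SD -{1}cD -cjM -SD cS.
clear -zc; move: zc; case: z => p q [] qE.
exists p; rewrite -complexr0; congr Complex.
lra.
Qed.
Unset Implicit Arguments.
Section Inst.
Variable R : rcfType.
Variable M : nat.
Variable N : nat -> nat.
Variable g : forall l, 'I_(N l) -> 'I_(N l.+1).
Variable A : forall l, 'M[R]_(N l).
Variable a : 'I_(N 0) -> R.
Variable Cm : forall l, 'M[R]_(N l.+1, N l).
Hypothesis hN : N M = 1%N.
Hypothesis hG : forall l, (l < M)%N -> hier_groups l (g l).
Hypothesis hA : forall l, (l < M)%N -> group_graph l (g l) (A l).
Hypothesis ha : forall i, 0 < a i.
Hypothesis hC : forall l, (l.+1 < M)%N -> stoch_sel l (g l) (Cm l).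
Hypothesis hM : (2 <= M)%N.

Lemma CB l : (l.+1 < M)%N -> Cm l *m Bmx g l = 1%:M.
Proof.
move=> lM; have [_ Cnz Csum] := hC _ lM.
apply/matrixP => p q; rewrite !mxE.
rewrite (eq_bigr (fun i => if g l i == q then Cm l p i else 0)); last first.
  by move=> i _; rewrite mxE; case: eqP; rewrite ?mulr1 ?mulr0.
rewrite -big_mkcond /=; case: eqP => [<-|ne]; first exact: Csum.
rewrite big1 // => i /eqP giq; have [//|/Cnz gip] := eqVneq (Cm l p i) 0.
by case: ne; rewrite -giq gip.
Qed.

Lemma CprodB l : (l < M)%N -> Cprod Cm l *m Bprod g l = 1%:M.
Proof.
elim: l => [|l IH] lM /=; first by rewrite mul1mx.
by rewrite -mulmxA (mulmxA (Cprod Cm l)) IH ?(ltn_trans _ lM) // mul1mx CB.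
Qed.

Lemma LapB l : (l < M)%N -> laplacian _ (A l) *m Bmx g l = 0.
Proof.
move=> lM; have [_ _ _ Ag _] := hA _ lM.
apply/matrixP => i q; rewrite /laplacian mulmxBl mul_diag_mx !mxE.
have e : \sum_j A l i j * (g l j == q)%:R = (\sum_j A l i j) * (g l i == q)%:R.
  rewrite mulr_suml; apply: eq_bigr => j _.
  by have [/eqP ->|/Ag ->] := boolP (A l i j == 0); rewrite ?mul0r.
apply/eqP; rewrite subr_eq0 -e; apply/eqP; apply: eq_bigr => j _.
by rewrite mxE.
Qed.

Lemma LeB l : (l < M)%N -> Le g a A l *m Bmx g l = 0.
Proof. by move=> lM; rewrite /Le -mulmxA LapB // mulmx0. Qed.

Lemma Bfact l m : (l <= m)%N -> exists Y, Bprod (R:=R) g m = Bprod g l *m Y.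
Proof.
elim: m => [|m IH]; first by rewrite leqn0 => /eqP ->; exists 1%:M; rewrite mulmx1.
rewrite leq_eqVlt => /orP [/eqP ->|lm]; first by exists 1%:M; rewrite mulmx1.
by have [Y e] := IH lm; exists (Y *m Bmx g m); rewrite /= e mulmxA.
Qed.

Lemma H2R l m : (l < M)%N -> (l < m)%N ->
  Le g a A l *m Cprod Cm l *m Bprod g m = 0.
Proof.
move=> lM lm; have [Y ->] := Bfact _ _ lm.
rewrite /= -!mulmxA (mulmxA (Cprod Cm l)) CprodB // mul1mx.
by rewrite !mulmxA LeB // !mul0mx.
Qed.

Lemma Bones l : Bmx g l *m const_mx 1 = const_mx 1 :> 'M[R]_(N l, 1).
Proof.
apply/matrixP => i k; rewrite !mxE (bigD1 (g l i)) //= big1 ?addr0.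
  by rewrite !mxE eqxx mulr1.
by move=> p /negPf np; rewrite !mxE eq_sym np mul0r.
Qed.

Lemma Bprod_ones m : Bprod g m *m const_mx 1 = const_mx 1 :> 'M[R]_(N 0, 1).
Proof.
elim: m => [|m IH] /=; first by rewrite mul1mx.
by rewrite -mulmxA Bones.
Qed.

Lemma Npos l : (l <= M)%N -> (0 < N l)%N.
Proof.
have step k : (k < M)%N -> (0 < N k.+1)%N -> (0 < N k)%N.
  move=> kM Nk; have [_ surj] := hG _ kM.
  by have [i _] := surj (Ordinal Nk); apply: leq_ltn_trans (ltn_ord i).
suff H d : (d <= M)%N -> (0 < N (M - d))%N.
  by move=> lM; have := H (M - l)%N (leq_subr _ _); rewrite subKn.
elim: d => [|d IH] dM; first by rewrite subn0 hN.
apply: step; first lia.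
by rewrite (_ : (M - d.+1).+1 = M - d)%N ?IH //; [exact: ltnW | lia].
Qed.

Lemma BprodM0 : Bprod (R:=R) g M != 0.
Proof.
apply/eqP => B0; have := Bprod_ones M; rewrite B0 mul0mx => /matrixP h.
have N0 := Npos _ (leq0n M).
by have := h (Ordinal N0) 0; rewrite !mxE => /eqP; rewrite eq_sym oner_eq0.
Qed.

Lemma wt_pos l : (l < M)%N -> forall i, 0 < wt g a l i.
Proof.
elim: l => [|l IH] lM i /=; first exact: ha.
have [_ surj] := hG _ (ltnW lM); have [i0 gi0] := surj i.
rewrite (bigD1 i0) /=; last by rewrite gi0.
apply: lt_le_trans (IH (ltnW lM) i0) _; rewrite lerDl.
by apply: sumr_ge0 => j _; apply: ltW; apply: IH (ltnW lM) j.
Qed.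

Lemma Le_formula l : (l < M)%N ->
  Le g a A l = \matrix_(i, j) ((wt g a l i)^-1 * laplacian _ (A l) i j).
Proof.
move=> lM; rewrite /Le /Kmx.
set d := \row_i wt g a l i.
have e : diag_mx d *m diag_mx (\row_i (d 0 i)^-1) = 1%:M.
  rewrite mulmx_diag -diag_const_mx; congr diag_mx; apply/rowP => i.
  by rewrite !mxE mulfV // gt_eqF // wt_pos.
have [ud _] := mulmx1_unit e.
have -> : invmx (diag_mx d) = diag_mx (\row_i (d 0 i)^-1).
  by rewrite -[RHS](mulKmx ud) e mulmx1.
by rewrite mul_diag_mx; apply/matrixP => i j; rewrite !mxE.
Qed.

Lemma Lap_sym l : (l < M)%N -> forall i j, laplacian _ (A l) i j = laplacian _ (A l) j i.
Proof.
move=> lM i j; have [_ AT _ _ _] := hA _ lM.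
have As : A l i j = A l j i by rewrite -{1}AT mxE.
rewrite /laplacian !mxE; case: (eqVneq i j) => [->|ne] //.
by rewrite As.
Qed.

Lemma ceigE n (X : 'M[R]_n) z : ceig X z = eigenvalue (map_mx (real_complex R) X) z.
Proof. by []. Qed.

Local Notation f := (real_complex R).
Let P l := map_mx f (Bprod (R:=R) g l).
Let Q l := map_mx f (Cprod Cm l).
Let E l := map_mx f (Le g a A l).

Let M0 : (0 < M)%N. Proof. by apply: leq_trans hM. Qed.
Let fP0 : P 0 = 1%:M. Proof. exact: map_mx1. Qed.
Let fH1 l : (l < M)%N -> Q l *m P l = 1%:M.
Proof. by move=> lM; rewrite -map_mxM CprodB // map_mx1. Qed.
Let fH2 l m : (l < M)%N -> (l < m)%N -> E l *m Q l *m P m = 0.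
Proof. by move=> lM lm; rewrite -!map_mxM H2R // map_mx0. Qed.
Let fH3 l m : (l <= m)%N -> exists Y, P m = P l *m Y.
Proof. by move=> lm; have [Y e] := Bfact _ _ lm; exists (map_mx f Y); rewrite /P e map_mxM. Qed.
Let fHPM : P M != 0.
Proof. by rewrite /P map_mx_eq0 BprodM0. Qed.
Let fLlay l : map_mx f (Llay g a A Cm l) = P l *m E l *m Q l.
Proof. by rewrite /Llay 2!map_mxM. Qed.
Let fLtot : map_mx f (Ltot g a A Cm M) = Lt M P Q E.
Proof.
rewrite /Ltot /Lt; elim/big_rec2: _ => [|i X Y _ <-]; first exact: map_mx0.
by rewrite map_mxD fLlay.
Qed.

Lemma main_layer l z : (l < M)%N ->
  (ceig (Le g a A l) z <-> ceig (Llay g a A Cm l) z).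
Proof.
move=> lM; rewrite !ceigE fLlay -/(E l).
have [->|z0] := eqVneq z 0.
  split=> _; first exact: (Llay_eig0 fH2 fHPM lM).
  exact: (Le_eig0 fH1 fH2 fH3 fHPM lM).
split; first exact: (E_to_Llay fH1 lM).
exact: (Llay_to_E fH1 lM z0).
Qed.

Lemma main_real l z : (l < M)%N -> ceig (Le g a A l) z -> exists r : R, z = (r%:C)%C.
Proof.
move=> lM; rewrite ceigE Le_formula //; apply: real_eig.
  exact: wt_pos.
exact: Lap_sym.
Qed.

Lemma main_tot z : ceig (Ltot g a A Cm M) z <->
  z = 0 \/ exists2 l, (l < M)%N & z != 0 /\ ceig (Le g a A l) z.
Proof.
rewrite ceigE fLtot; split => [ez|].
  have [->|z0] := eqVneq z 0; first by left.
  have [l lM el] := Lt_to_E fP0 fH1 fH2 fHPM M0 ez.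
  by right; exists l; rewrite // ceigE.
case=> [->|[l lM [z0 el]]]; first exact: (Lt_eig0 fH2 fHPM).
by apply: (E_to_Lt fH1 fH2 fH3 lM z0); rewrite -ceigE.
Qed.

End Inst.

Theorem theorem2 (R : rcfType) (M : nat) (N : nat -> nat)
    (g : forall l, 'I_(N l) -> 'I_(N l.+1))
    (A : forall l, 'M[R]_(N l))
    (a : 'I_(N 0) -> R)
    (Cm : forall l, 'M[R]_(N l.+1, N l)) :
  (2 <= M)%N ->
  N M = 1%N ->
  (forall l, (l < M)%N -> hier_groups l (g l)) ->
  (forall l, (l < M)%N -> group_graph l (g l) (A l)) ->
  (forall i, 0 < a i) ->
  (forall l, (l.+1 < M)%N -> stoch_sel l (g l) (Cm l)) ->
  (forall l, (l < M)%N ->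
     (forall z, ceig (Le g a A l) z <-> ceig (Llay g a A Cm l) z)
     /\ (forall z, ceig (Llay g a A Cm l) z -> exists r : R, z = (r%:C)%C)
     /\ (forall Cm' : forall l, 'M[R]_(N l.+1, N l),
           (forall l', (l'.+1 < M)%N -> stoch_sel l' (g l') (Cm' l')) ->
           forall z, ceig (Llay g a A Cm l) z <-> ceig (Llay g a A Cm' l) z))
  /\ (forall z, ceig (Ltot g a A Cm M) z <->
        z = 0 \/ exists2 l, (l < M)%N & z != 0 /\ ceig (Le g a A l) z).
Proof.
move=> hM hN hG hA ha hC; split.
  move=> l lM; split.
    move=> z. exact: (main_layer R M N g A a Cm hN hG hA hC hM l z lM).
  split.
    move=> z ez.
    have ez2 := proj2 (main_layer R M N g A a Cm hN hG hA hC hM l z lM) ez.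
    exact: (main_real R M N g A a hG hA ha l z lM ez2).
  move=> Cm' hC' z.
  have h1 := main_layer R M N g A a Cm hN hG hA hC hM l z lM.
  have h2 := main_layer R M N g A a Cm' hN hG hA hC' hM l z lM.
  by split => H; [exact: (proj1 h2 (proj2 h1 H)) | exact: (proj1 h1 (proj2 h2 H))].
exact: (main_tot R M N g A a Cm hN hG hA hC hM).
Qed.
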